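(* Let $p\ge 1$, let $(X,Y)$ be random with $Y\in\{0,1\}$, let $f:\mathcal{X}\to[0,1]$ be any model and let $\mathcal{B}=\{I_1,\dots,I_B\}$ be any binning scheme. Then $\ell_p\text{-CE}(f_{\mathcal{B}})\le \ell_p\text{-CE}(f)$.
   Context: For $h:\mathcal{X}\to[0,1]$, $\ell_p\text{-CE}(h)=\big(\mathbb{E}\big[|h(X)-\mathbb{E}[Y\mid h(X)]|^p\big]\big)^{1/p}$. A binning scheme of size $B$ is a set of $B$ intervals $I_1,\dots,I_B$ partitioning $[0,1]$; for $z\in[0,1]$, $\beta(z)$ is the index $j$ with $z\in I_j$. The binned model is $f_{\mathcal{B}}(x)=\mathbb{E}\big[f(X)\mid f(X)\in I_{\beta(f(x))}\big]$. *)

(* Defs.v *)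
From HB Require Import structures.
From mathcomp Require Import all_boot all_order all_algebra.
From mathcomp Require Import all_classical all_reals all_analysis.
Set Implicit Arguments. Unset Strict Implicit. Unset Printing Implicit Defensive.
Import Order.TTheory GRing.Theory Num.Theory.
Local Open Scope classical_set_scope.
Local Open Scope ring_scope.

Section defs.
Context {d : measure_display} {Omega : measurableType d} {R : realType}.
Context {dX : measure_display} {Xs : measurableType dX}.

Definition binning_scheme (B : nat) (I : 'I_B -> interval R) : Prop :=
  (forall j, exists z : R, z \in I j) /\
  (forall j k (z : R), z \in I j -> z \in I k -> j = k) /\
  (forall z : R, (exists j, z \in I j) <-> (0 <= z <= 1)).

Definition beta (B : nat) (I : 'I_B -> interval R) (z : R) : option 'I_B :=
  [pick j | z \in I j].

(* E[f(X) | f(X) \in I_j] = E[f(X) 1_{f(X) \in I_j}] / P(f(X) \in I_j). *)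
Definition bin_mean (P : probability Omega R) (X : Omega -> Xs) (f : Xs -> R)
  (B : nat) (I : 'I_B -> interval R) (j : 'I_B) : R :=
  fine (\int[P]_(w in (f \o X) @^-1` [set z | z \in I j]) (f (X w))%:E) /
  fine (P ((f \o X) @^-1` [set z | z \in I j])).

Definition binned_model (P : probability Omega R) (X : Omega -> Xs)
  (f : Xs -> R) (B : nat) (I : 'I_B -> interval R) (x : Xs) : R :=
  match beta I (f x) with
  | Some j => bin_mean P X f I j
  | None => 0
  end.

(* g \o W is a version of the conditional expectation E[Z | W]:
   g is Borel and E[Z 1_{W in A}] = E[g(W) 1_{W in A}] for every Borel A
   (by Doob-Dynkin every sigma(W)-measurable variable has the form g \o W). *)
Definition cond_exp_version (P : probability Omega R) (Z : Omega -> R)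
  (W : Omega -> R) (g : R -> R) : Prop :=
  measurable_fun setT g /\
  forall A : set R, measurable A ->
    (\int[P]_(w in W @^-1` A) (Z w)%:E =
     \int[P]_(w in W @^-1` A) (g (W w))%:E)%E.

(* l_p-CE(h) = (E |h(X) - E[Y | h(X)]|^p)^(1/p), where g is a version of
   the conditional expectation E[Y | h(X)] (as a function of h(X)). *)
Definition lp_CE (P : probability Omega R) (X : Omega -> Xs) (Y : Omega -> R)
  (h : Xs -> R) (g : R -> R) (p : R) : \bar R :=
  Lnorm P p%:E (fun w => (h (X w) - g (h (X w)))%:E).

End defs.

(* Main.v *)
Require Import Defs.
From HB Require Import structures.
From mathcomp Require Import all_boot all_order all_algebra.
From mathcomp Require Import all_classical all_reals all_analysis.
From mathcomp Require Import measurable_realfun.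
From mathcomp Require Import ring lra.
Import Order.TTheory GRing.Theory Num.Theory.
Local Open Scope classical_set_scope.
Local Open Scope ring_scope.

Lemma tangent_powR (R : realType) (p a x : R) : 1 < p -> 0 <= a -> 0 <= x ->
  a `^ (p - 1) * x <= x `^ p / p + a `^ p * (1 - p^-1).
Proof.
move=> p1 a0 x0.
have p0 : 0 < p by rewrite (lt_trans ltr01).
have pm1 : 0 < p - 1 by rewrite subr_gt0.
pose q := p / (p - 1).
have q0 : 0 < q by rewrite divr_gt0.
have qV : q^-1 = 1 - p^-1.
  by rewrite /q invf_div mulrBl mulfV ?gt_eqF// mul1r.
have pq : p^-1 + q^-1 = 1 by rewrite qV addrC subrK.
have := @conjugate_powR R x (a `^ (p - 1)) p q x0 (powR_ge0 _ _) p0 q0 pq.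
rewrite -powRrM /q [(p - 1) * _]mulrC divfK ?gt_eqF// -/q qV.
by rewrite mulrC.
Qed.

Lemma jensen_atom (d : measure_display) (T : measurableType d) (R : realType)
  (mu : {measure set T -> \bar R}) (A : set T) (h : T -> R) (a p : R) :
  measurable A -> measurable_fun setT h -> 1 <= p -> 0 <= a -> (mu A < +oo)%E ->
  (a%:E * mu A <= \int[mu]_(x in A) (`|h x|)%:E)%E ->
  ((a `^ p)%:E * mu A <= \int[mu]_(x in A) (`|h x| `^ p)%:E)%E.
Proof.
move=> mA mh p1 a0 muAoo H.
have mhA : measurable_fun A h := measurable_funTS mh.
have mabs : measurable_fun A (fun x => `|h x|).
  exact: (measurableT_comp (@normr_measurable R setT) mhA).
have mpow : measurable_fun A (fun x => `|h x| `^ p).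
  exact: (measurableT_comp (@measurable_powR R p) mabs).
have [->|pn1] := eqVneq p 1.
  rewrite powRr1//; apply: (le_trans H); apply: ge0_le_integral => //.
  - exact/measurable_EFinP.
  - by apply/measurable_EFinP; under eq_fun do rewrite powRr1//.
  - by move=> x _; rewrite powRr1.
have {pn1 p1} p1 : 1 < p by rewrite lt_neqAle eq_sym pn1.
have p0 : 0 < p by rewrite (lt_trans ltr01).
have [->|an0] := eqVneq a 0.
  by rewrite powR0 ?gt_eqF// mul0e integral_ge0// => x _; rewrite lee_fin powR_ge0.
have {an0 a0} a0 : 0 < a by rewrite lt_neqAle eq_sym an0.
have muA0 : (0 <= mu A)%E by [].
set K := (\int[mu]_(x in A) _)%E.
have K0 : (0 <= K)%E by apply: integral_ge0 => x _; rewrite lee_fin powR_ge0.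
have [Koo|] := eqVneq K +oo%E; first by rewrite Koo leey.
move=> Kny; have Kfin : K \is a fin_num by rewrite ge0_fin_numE// ltey.
have pi0' : (0 < (p^-1)%:E)%E by rewrite lte_fin invr_gt0.
have muAfin : mu A \is a fin_num by rewrite ge0_fin_numE.
have mabsE : measurable_fun A (fun x => (`|h x|)%:E) by exact/measurable_EFinP.
have mpowE : measurable_fun A (fun x => (`|h x| `^ p)%:E) by exact/measurable_EFinP.
have g40 : forall x, A x -> (0 <= (`|h x|)%:E)%E.
  by move=> x _; rewrite lee_fin.
have i1 := ge0_integralZl_EFin mu mA g40 mabsE (powR_ge0 a (p - 1)).
have g30 : forall x, A x -> (0 <= (`|h x| `^ p)%:E)%E.
  by move=> x _; rewrite lee_fin powR_ge0.
have i2 := ge0_integralZr mu mA mpowE g30 (ltW pi0').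
have c0 : 0 <= a `^ p * (1 - p^-1).
  by rewrite mulr_ge0 ?powR_ge0// subr_ge0 invf_le1// ltW.
have i3 := integral_cst mu mA (a `^ p * (1 - p^-1))%:E.
have mg1 : measurable_fun A (fun x => (`|h x| `^ p)%:E * (p^-1)%:E)%E.
  by apply: emeasurable_funM => //; exact: measurable_cst.
have g10 : forall x, A x -> (0 <= (`|h x| `^ p)%:E * (p^-1)%:E)%E.
  by move=> x _; rewrite -EFinM lee_fin mulr_ge0 ?powR_ge0// ltW// invr_gt0.
have g20 : forall x, A x -> (0 <= cst (a `^ p * (1 - p^-1))%:E x)%E.
  by move=> x _; rewrite lee_fin.
have i4 := ge0_integralD mu mA g10 mg1 g20 (measurable_cst _).
have step : ((a `^ (p - 1))%:E * (a%:E * mu A) <=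
    K * (p^-1)%:E + (a `^ p * (1 - p^-1))%:E * mu A)%E.
  apply: (le_trans (lee_wpmul2l _ H)); first by rewrite lee_fin powR_ge0.
  rewrite -i1 /K -i2 -i3 -i4.
  apply: ge0_le_integral => //.
  - by move=> x _; rewrite -EFinM lee_fin mulr_ge0 ?powR_ge0.
  - by apply: emeasurable_funM => //; exact: measurable_cst.
  - by apply: emeasurable_funD => //; exact: measurable_cst.
  - move=> x _ /=; rewrite -EFinM -EFinM -EFinD lee_fin.
    by apply: tangent_powR => //; exact: ltW.
move: step; rewrite -(fineK muAfin) -(fineK Kfin) -!EFinM -EFinD lee_fin.
have e : a `^ (p - 1) * a = a `^ p.
  rewrite -{2}(powRr1 (ltW a0)) -powRD ?subrK// gt_eqF// implybT.
rewrite mulrA e => step.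
rewrite lee_fin.
have pi0 : 0 < p^-1 by rewrite invr_gt0.
set P := a `^ p * fine (mu A) in step *.
move: step; set k := fine K; set pi := p^-1 => step.
rewrite mulrC -mulrA -/P in step.
have eP : a `^ p * ((1 - pi) * fine (mu A)) = P - pi * P by rewrite /P; ring.
rewrite eP in step.
have : pi * (P - k) <= 0 by rewrite mulrBr; lra.
by rewrite pmulr_rle0 ?subr_le0.
Qed.

Lemma partition_integral (d : measure_display) (T : measurableType d) (R : realType)
  (mu : {measure set T -> \bar R}) (D : set T) (I : eqType) (s : seq I)
  (E : I -> set T) (h : T -> \bar R) :
  measurable D -> uniq s -> (forall i, measurable (E i)) ->
  (forall x, D x -> exists2 i, i \in s & E i x) ->
  (forall i j x, i \in s -> j \in s -> E i x -> E j x -> i = j) ->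
  measurable_fun D h -> (forall x, D x -> (0 <= h x)%E) ->
  (\int[mu]_(x in D) h x = \sum_(i <- s) \int[mu]_(x in D `&` E i) h x)%E.
Proof.
move=> mD us mE cov disj mh h0.
rewrite (eq_integral (fun x => \sum_(i <- s) (h x * (\1_(E i) x)%:E)%E)); last first.
  move=> x /[!inE] Dx; have [i0 si0 Ei0] := cov x Dx.
  rewrite (bigD1_seq i0) //= indicE mem_set // mule1.
  rewrite big_seq_cond big1 ?adde0 // => i /andP[si ne].
  rewrite indicE memNset ?mule0 //.
  by move=> Ei; move/eqP: ne; apply; exact: disj Ei Ei0.
rewrite ge0_integral_sum //; last 2 first.
- move=> i; apply: emeasurable_funM => //.
  by apply/measurable_EFinP; exact: measurable_indic.
- by move=> i x Dx; rewrite mule_ge0 ?h0 // lee_fin indicE.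
apply: eq_bigr => i _.
by rewrite __deprecated__integral_setI_indic.
Qed.

Theorem mainTheorem3 (d : measure_display) (Omega : measurableType d)
  (R : realType) (P : probability Omega R)
  (dX : measure_display) (Xs : measurableType dX)
  (X : Omega -> Xs) (Y : Omega -> R) (f : Xs -> R)
  (B : nat) (I : 'I_B -> interval R) (p : R)
  (g gB : R -> R) :
  1 <= p ->
  measurable_fun setT X ->
  measurable_fun setT Y ->
  (forall w, Y w = 0 \/ Y w = 1) ->
  measurable_fun setT f ->
  (forall x, 0 <= f x <= 1) ->
  binning_scheme I ->
  cond_exp_version P Y (f \o X) g ->
  cond_exp_version P Y (binned_model P X f I \o X) gB ->
  (lp_CE P X Y (binned_model P X f I) gB p <= lp_CE P X Y f g p)%E.
Proof.
move=> p1 mX mY Y01 mf f01 [Inon [Idisj Icov]] [mg cg] [mgB cgB].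
pose m := bin_mean P X f I.
have m_ge0 : forall j, 0 <= m j.
  move=> j; rewrite /m /bin_mean divr_ge0 // fine_ge0 //.
  by apply: integral_ge0 => w _; rewrite lee_fin; case/andP: (f01 (X w)).
pose bm z := match beta I z with Some j => m j | None => 0 end.
have bmE : forall z j, z \in I j -> bm z = m j.
  move=> z j zj; rewrite /bm /beta; case: pickP => [k zk|/(_ j)].
    by rewrite (Idisj _ _ _ zk zj).
  by rewrite zj.
have bmN : forall z, (forall j, z \notin I j) -> bm z = 0.
  move=> z nz; rewrite /bm /beta; case: pickP => [k zk|//].
  by move: (nz k); rewrite zk.
have mbm : measurable_fun setT bm.
  rewrite (_ : bm = fun z => \sum_(j < B) m j * \1_[set` I j] z); last first.
    apply/funext => z; case: (pselect (exists j, z \in I j)) => [[j zj]|nz].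
      rewrite (bmE _ _ zj) (bigD1 j) //= indicE mem_set // mulr1 big1 ?addr0 //.
      move=> k kj; rewrite indicE memNset ?mulr0 //= => zk.
      by move/eqP: kj; apply; exact: Idisj zk zj.
    rewrite bmN; last by move=> j; apply/negP => zj; apply: nz; exists j.
    rewrite big1 // => j _; rewrite indicE memNset ?mulr0 //= => zj.
    by apply: nz; exists j.
  apply: measurable_sum => j; apply: measurable_funM => //.
have mfX : measurable_fun setT (f \o X) := measurableT_comp mf mX.
pose W := bm \o (f \o X).
have mW : measurable_fun setT W := measurableT_comp mbm mfX.
have WE : binned_model P X f I \o X = W by [].
pose fX := f \o X.
pose Z := fun w => fX w - g (fX w).
pose ZB := fun w => W w - gB (W w).
have mZ : measurable_fun setT Z.
  apply: measurable_funB => //; exact: measurableT_comp mg mfX.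
have mZB : measurable_fun setT ZB.
  apply: measurable_funB => //; exact: measurableT_comp mgB mW.
have p0 : 0 < p by rewrite (lt_le_trans ltr01).
rewrite /lp_CE unlock.
apply: gt0_ler_poweR; first by rewrite invr_ge0 ltW.
- by rewrite in_itv /= leey andbT; apply: integral_ge0 => w _; rewrite /= ?abse_EFin ?poweR_EFin ?lee_fin ?powR_ge0.
- by rewrite in_itv /= leey andbT; apply: integral_ge0 => w _; rewrite /= ?abse_EFin ?poweR_EFin ?lee_fin ?powR_ge0.
under eq_integral do rewrite abse_EFin poweR_EFin.
under [X in (_ <= X)%E]eq_integral do rewrite abse_EFin poweR_EFin.
change (\int[P]_x (`|ZB x| `^ p)%:E <= \int[P]_x (`|Z x| `^ p)%:E)%E.
pose V := undup [seq m j | j <- enum 'I_B].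
pose A c := W @^-1` [set c].
have mA : forall c, measurable (A c).
  by move=> c; rewrite -[A c]setTI /A; apply: mW => //; exact: measurable_set1.
pose S j := [set z : R | z \in I j].
pose Bn j := fX @^-1` S j.
have mBn : forall j, measurable (Bn j).
  by move=> j; rewrite -[Bn j]setTI /Bn; apply: mfX => //; exact: measurable_itv.
have inbin : forall w, exists j, fX w \in I j.
  by move=> w; apply/Icov; exact: f01.
have WBn : forall j w, Bn j w -> W w = m j.
  by move=> j w Bw; rewrite /W /= (bmE _ j).
have covA : forall w, setT w -> exists2 c, c \in V & A c w.
  move=> w _; have [j wj] := inbin w; exists (m j).
    by rewrite mem_undup; apply: map_f; rewrite mem_enum.
  exact: WBn.
have disjA : forall c c' w, c \in V -> c' \in V -> A c w -> A c' w -> c = c'.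
  by move=> c c' w _ _ /= <- <-.
have covB : forall (D : set Omega) w, D w -> exists2 j, j \in enum 'I_B & Bn j w.
  by move=> D w _; have [j wj] := inbin w; exists j; rewrite ?mem_enum.
have disjB : forall j j' w, j \in enum 'I_B -> j' \in enum 'I_B -> Bn j w -> Bn j' w -> j = j'.
  by move=> j j' w _ _; exact: Idisj.
have mpZB : measurable_fun setT (fun x => `|ZB x| `^ p) :=
  measurableT_comp (measurable_powR p) (measurableT_comp (@normr_measurable R setT) mZB).
have mpZ : measurable_fun setT (fun x => `|Z x| `^ p) :=
  measurableT_comp (measurable_powR p) (measurableT_comp (@normr_measurable R setT) mZ).
rewrite (@partition_integral _ _ _ P setT _ V A _ measurableT (undup_uniq _) mA covA disjA); last 2 first.
- exact/measurable_EFinP.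
- by move=> w _; rewrite lee_fin powR_ge0.
rewrite [X in (_ <= X)%E](@partition_integral _ _ _ P setT _ V A _ measurableT (undup_uniq _) mA covA disjA); last 2 first.
- exact/measurable_EFinP.
- by move=> w _; rewrite lee_fin powR_ge0.
have binc : forall c, c \in V -> (\int[P]_(w in A c) (fX w)%:E = c%:E * P (A c))%E.
  move=> c cV.
  have [j0 _ cj0] : exists2 j0, j0 \in enum 'I_B & c = m j0.
    by move: cV; rewrite mem_undup => /mapP.
  have c0 : 0 <= c by rewrite cj0.
  have perbin : forall j, (\int[P]_(w in Bn j) (fX w)%:E = (m j)%:E * P (Bn j))%E.
    move=> j.
    set J := (\int[P]_(w in Bn j) _)%E.
    have J0 : (0 <= J)%E by apply: integral_ge0 => w _; rewrite lee_fin; case/andP: (f01 (X w)).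
    have JP : (J <= P (Bn j))%E.
      rewrite -[P (Bn j)]mul1e -integral_cst //; apply: ge0_le_integral => //.
      - by move=> w _; rewrite lee_fin; case/andP: (f01 (X w)).
      - exact/measurable_EFinP/measurable_funTS.
      - by move=> w _; rewrite lee_fin; case/andP: (f01 (X w)).
    have mjE : m j = fine J / fine (P (Bn j)) by [].
    have Pfin : P (Bn j) \is a fin_num.
      by rewrite ge0_fin_numE // (le_lt_trans (probability_le1 P (mBn j)) (ltry 1)).
    have Jfin : J \is a fin_num.
      by rewrite ge0_fin_numE // (le_lt_trans JP) // -ge0_fin_numE.
    have [P0|Pn0] := eqVneq (P (Bn j)) 0%E.
      by rewrite P0 mule0; apply/le_anti; rewrite J0 andbT -P0.
    rewrite -(fineK Pfin) -EFinM mjE divfK ?fineK //.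
    by rewrite fine_eq0.
  rewrite (@partition_integral _ _ _ P (A c) _ (enum 'I_B) Bn _ (mA c) (enum_uniq _) mBn (covB (A c)) disjB); last 2 first.
  - exact/measurable_EFinP/measurable_funTS.
  - by move=> w _; rewrite lee_fin; case/andP: (f01 (X w)).
  rewrite -integral_cst //.
  rewrite (@partition_integral _ _ _ P (A c) _ (enum 'I_B) Bn _ (mA c) (enum_uniq _) mBn (covB (A c)) disjB); last 2 first.
  - exact: measurable_cst.
  - by move=> w _; rewrite lee_fin.
  apply: eq_bigr => j _.
  have [mjc|mjc] := eqVneq (m j) c.
    have -> : A c `&` Bn j = Bn j.
      apply/seteqP; split => w; first by case.
      by move=> Bw; split => //; rewrite /A /= (WBn j w Bw).
    by rewrite perbin integral_cst // mjc.
  have -> : A c `&` Bn j = set0.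
    apply/seteqP; split => w // [Aw Bw]; move/eqP: mjc; apply.
    by rewrite -(WBn j w Bw).
  by rewrite !integral_set0.
rewrite !big_seq; apply: lee_sum => c cV; rewrite !setTI.
have [j0 _ cj0] : exists2 j0, j0 \in enum 'I_B & c = m j0.
  by move: cV; rewrite mem_undup => /mapP.
have c0 : 0 <= c by rewrite cj0.
have PAc : (P (A c) < +oo)%E := le_lt_trans (probability_le1 P (mA c)) (ltry 1).
have PAcfin : P (A c) \is a fin_num by rewrite ge0_fin_numE.
rewrite (eq_integral (fun _ => (`|c - gB c| `^ p)%:E)); last first.
  by move=> w; rewrite inE /A /ZB /= => ->.
rewrite integral_cst //.
apply: jensen_atom => //.
set J := (\int[P]_(x in A c) _)%E.
have [Joo|Jn] := eqVneq J +oo%E; first by rewrite Joo leey.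
have iZ : P.-integrable (A c) (EFin \o Z).
  apply/integrableP; split; first exact/measurable_EFinP/measurable_funTS.
  rewrite (eq_integral (fun x => (`|Z x|)%:E)); [by rewrite ltey|].
  by move=> x _; rewrite /= ?abse_EFin.
have ifX : P.-integrable (A c) (EFin \o fX).
  apply/integrableP; split; first exact/measurable_EFinP/measurable_funTS.
  apply: (@le_lt_trans _ _ (\int[P]_(x in A c) cst 1%E x)%E); [|by rewrite integral_cst // mul1e].
  apply: ge0_le_integral => //.
  - apply: measurableT_comp => //; exact/measurable_EFinP/measurable_funTS.
  - by move=> w _; rewrite /= ?abse_EFin lee_fin ger0_norm; case/andP: (f01 (X w)).
have igX : P.-integrable (A c) (EFin \o (fun w => g (fX w))).
  apply: (eq_integrable (mA c) _ _ _ (integrableB (mA c) ifX iZ)).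
  by move=> w _ /=; rewrite -EFinB /Z opprB addrC subrK.
have eqZ : (\int[P]_(w in A c) (Z w)%:E =
    \int[P]_(w in A c) (fX w)%:E - \int[P]_(w in A c) (g (fX w))%:E)%E.
  by rewrite -integralB_EFin //; apply: eq_integral => w _; rewrite EFinB.
have mbmS : measurable (bm @^-1` [set c]).
  by rewrite -[_ @^-1` _]setTI; apply: mbm => //; exact: measurable_set1.
have hY1 : (\int[P]_(w in A c) (Y w)%:E = \int[P]_(w in A c) (g (fX w))%:E)%E.
  exact: (cg _ mbmS).
have hY2 : (\int[P]_(w in A c) (Y w)%:E = \int[P]_(w in A c) (gB (W w))%:E)%E.
  exact: (cgB _ (measurable_set1 c)).
have hY3 : (\int[P]_(w in A c) (gB (W w))%:E = (gB c)%:E * P (A c))%E.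
  rewrite -integral_cst //; apply: eq_integral => w; rewrite inE /A /= => ->.
  by [].
rewrite -hY1 hY2 hY3 (binc c cV) in eqZ.
have : (`|\int[P]_(w in A c) (Z w)%:E| <= J)%E.
  have mZA : measurable_fun (A c) (EFin \o Z) by exact/measurable_EFinP/measurable_funTS.
  exact: (le_abse_integral P (mA c) mZA).
rewrite eqZ -(fineK PAcfin) -!EFinM -EFinB abse_EFin -mulrBl normrM.
by rewrite (ger0_norm (fine_ge0 (measure_ge0 P (A c)))) EFinM fineK.
Qed.
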